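(* Let $X$ be an idempotent Frobenius semiring and $n\ge1$. Then for every $j$ with $1\le j\le n$ and all $d_1\ge d_2\ge\dots\ge d_j$ in $\mathbb{N}$, $$\mathrm{Sym}_n(x_1^{d_1}\cdots x_j^{d_j})=e_j^{d_j}\cdot\mathrm{Sym}_n\big(x_1^{d_1-d_j}\cdots x_{j-1}^{d_{j-1}-d_j}\big)$$ as functions $X^n\to X$.
   Context: A semiring $(X,+,0,\cdot)$: $(X,+,0)$ commutative monoid, $(X,\cdot)$ semigroup, distributivity, $0$ absorbing. Idempotent: $x+x=x$. A Frobenius semiring is a unital commutative semiring with $(x+y)^n=x^n+y^n$ for all $x,y$, $n\ge1$. For a polynomial $p:X^n\to X$, $\mathrm{Sym}_n(p)(x_1,\dots,x_n)=\sum_{\sigma\in S_n}p(x_{\sigma(1)},\dots,x_{\sigma(n)})$; monomials in $x_1,\dots,x_j$ are regarded as functions of all $n$ variables. $e_j(x_1,\dots,x_n)$ is the sum of all products of $j$ distinct variables among $x_1,\dots,x_n$. *)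

(* Defs.v *)
From HB Require Import structures.
From mathcomp Require Import all_boot all_order all_algebra all_fingroup.
Set Implicit Arguments. Unset Strict Implicit. Unset Printing Implicit Defensive.
Import GRing.Theory.
Local Open Scope ring_scope.

(* A unital commutative semiring (0 absorbing, distributive) is a
   MathComp [comPzSemiRingType]. *)

Definition idempotent_semiring (X : comPzSemiRingType) : Prop :=
  forall x : X, x + x = x.

Definition frobenius_semiring (X : comPzSemiRingType) : Prop :=
  forall (x y : X) (k : nat), (0 < k)%N -> (x + y) ^+ k = x ^+ k + y ^+ k.

Definition SymPoly (X : comPzSemiRingType) (n : nat) (p : ('I_n -> X) -> X)
  (x : 'I_n -> X) : X :=
  \sum_(s : 'S_n) p (fun i => x (s i)).

(* the monomial x_1^{d_1} ... x_m^{d_m} (0-indexed: x_0^{d 0} ... x_{m-1}^{d (m-1)}),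
   regarded as a function of all n variables *)
Definition monom (X : comPzSemiRingType) (n m : nat) (d : nat -> nat)
  (x : 'I_n -> X) : X :=
  \prod_(i < n | (i < m)%N) x i ^+ d i.

Definition elem_sym (X : comPzSemiRingType) (n j : nat) (x : 'I_n -> X) : X :=
  \sum_(S : {set 'I_n} | #|S| == j) \prod_(i in S) x i.

(* Main.v *)
Require Import Defs.
From HB Require Import structures.
From mathcomp Require Import all_boot all_order all_algebra all_fingroup.
From mathcomp Require Import zify.
Set Implicit Arguments. Unset Strict Implicit. Unset Printing Implicit Defensive.
Import GRing.Theory.
Local Open Scope ring_scope.

Definition leS (X : comPzSemiRingType) (a b : X) := a + b = b.

Lemma leS_trans (X : comPzSemiRingType) (a b c : X) : leS a b -> leS b c -> leS a c.
Proof. by rewrite /leS => h1 h2; rewrite -h2 addrA h1. Qed.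

Lemma leS_add (X : comPzSemiRingType) (a b c : X) : leS a c -> leS b c -> leS (a + b) c.
Proof. by rewrite /leS => h1 h2; rewrite -addrA h2 h1. Qed.

Lemma leS_mulr (X : comPzSemiRingType) (a b r : X) : leS a b -> leS (a * r) (b * r).
Proof. by rewrite /leS => h; rewrite -mulrDl h. Qed.

Lemma leS_antisym (X : comPzSemiRingType) (a b : X) : leS a b -> leS b a -> a = b.
Proof. by rewrite /leS => h1 h2; rewrite -h2 addrC h1. Qed.

Lemma leS_sum (X : comPzSemiRingType) (I : finType) (P : pred I) (F : I -> X) b :
  (forall i, P i -> leS (F i) b) -> leS (\sum_(i | P i) F i) b.
Proof.
move=> h; apply: (big_ind (fun s => leS s b)) => //.
  by rewrite /leS add0r.
by move=> *; apply: leS_add.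
Qed.

Lemma leS_term (X : comPzSemiRingType) (hid : idempotent_semiring X)
  (I : finType) (P : pred I) (F : I -> X) i0 :
  P i0 -> leS (F i0) (\sum_(i | P i) F i).
Proof. by move=> h; rewrite /leS (bigD1 i0) //= addrA hid. Qed.

Lemma leS_refl (X : comPzSemiRingType) (hid : idempotent_semiring X) (a : X) : leS a a.
Proof. exact: hid. Qed.

Lemma natmul_id (X : comPzSemiRingType) (hid : idempotent_semiring X) (a : X) k :
  (0 < k)%N -> a *+ k = a.
Proof.
case: k => // k _; elim: k => [|k ih]; first by rewrite mulr1n.
by rewrite mulrS ih hid.
Qed.

Lemma mon2 (X : comPzSemiRingType) (hid : idempotent_semiring X)
  (hfr : frobenius_semiring X) (a b : X) p q :
  leS (a ^+ p * b ^+ q) (a ^+ (p + q) + b ^+ (p + q)).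
Proof.
case: (posnP (p + q)) => hpq.
  have [-> ->] : p = 0%N /\ q = 0%N by lia.
  by rewrite !expr0 mulr1 /leS !hid.
rewrite -hfr // exprDn.
have hq : (q < (p + q).+1)%N by lia.
have := @leS_term _ hid _ predT (fun i : 'I_(p + q).+1 => a ^+ (p + q - i) * b ^+ i *+ 'C(p + q, i)) (Ordinal hq) isT.
by rewrite /= natmul_id ?bin_gt0 ?leq_addl // addnK.
Qed.

Lemma frob_sum (X : comPzSemiRingType) (hfr : frobenius_semiring X) (c : nat)
  (hc : (0 < c)%N) (I : Type) (r : seq I) (P : pred I) (F : I -> X) :
  (\sum_(i <- r | P i) F i) ^+ c = \sum_(i <- r | P i) F i ^+ c.
Proof.
apply: (big_morph (fun a : X => a ^+ c)).
  by move=> a b; rewrite hfr.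
by rewrite expr0n; case: c hc.
Qed.

Definition mon (X : comPzSemiRingType) n (x : 'I_n -> X) (f : 'I_n -> nat) : X :=
  \prod_k x k ^+ f k.

Lemma mon_mul (X : comPzSemiRingType) n (x : 'I_n -> X) f g :
  mon x f * mon x g = mon x (fun k => (f k + g k)%N).
Proof. by rewrite /mon -big_split; apply: eq_bigr => k _; rewrite exprD. Qed.

Lemma mon_split2 (X : comPzSemiRingType) n (x : 'I_n -> X) f u s : u != s ->
  mon x f = x u ^+ f u * x s ^+ f s * \prod_(k | (k != u) && (k != s)) x k ^+ f k.
Proof.
move=> hus; rewrite /mon (bigD1 u) //= (bigD1 s) /=; last by rewrite eq_sym.
by rewrite mulrA.
Qed.

Lemma mon_exch (X : comPzSemiRingType) (hid : idempotent_semiring X)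
  (hfr : frobenius_semiring X) n (x : 'I_n -> X) f g1 g2 u s a c :
  u != s -> f u = a -> f s = c -> g1 u = (a + c)%N -> g1 s = 0%N ->
  g2 u = 0%N -> g2 s = (a + c)%N ->
  (forall k, k != u -> k != s -> g1 k = f k /\ g2 k = f k) ->
  leS (mon x f) (mon x g1 + mon x g2).
Proof.
move=> hus hfu hfs h1u h1s h2u h2s ho.
rewrite (@mon_split2 _ _ x f u s hus) (@mon_split2 _ _ x g1 u s hus) (@mon_split2 _ _ x g2 u s hus).
set R := \prod_(k | _) _.
have -> : \prod_(k | (k != u) && (k != s)) x k ^+ g1 k = R.
  by apply: eq_bigr => k /andP [h h']; case: (ho k h h') => ->.
have -> : \prod_(k | (k != u) && (k != s)) x k ^+ g2 k = R.
  by apply: eq_bigr => k /andP [h h']; case: (ho k h h') => _ ->.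
rewrite hfu hfs h1u h1s h2u h2s !expr0 mulr1 mul1r -mulrDl.
exact/leS_mulr/mon2.
Qed.

Lemma card_lt n m : (m <= n)%N -> #|[set i : 'I_n | (i < m)%N]| = m.
Proof.
move=> hm.
have -> : [set i : 'I_n | (i < m)%N] = (widen_ord hm) @: [set: 'I_m].
  apply/setP => i; rewrite inE; apply/idP/imsetP.
    by move=> h; exists (Ordinal h) => //; apply: val_inj.
  by case=> k _ ->; rewrite /= ltn_ord.
by rewrite card_imset ?cardsT ?card_ord //; by move=> a b /(congr1 val) /= h; apply: val_inj.
Qed.

Lemma card_U n m (t : 'S_n) : (m <= n)%N -> #|[set k | (t k < m)%N]| = m.
Proof.
move=> hm.
have -> : [set k | (t k < m)%N] = t @^-1: [set i : 'I_n | (i < m)%N].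
  by apply/setP => k; rewrite !inE.
by rewrite card_preimset ?card_lt //; apply: perm_inj.
Qed.

Definition Dv (j : nat) (d : nat -> nat) n (i : 'I_n) : nat := if (i < j)%N then d i else 0%N.
Definition Ev (j : nat) (d : nat -> nat) n (i : 'I_n) : nat :=
  if (i < j.-1)%N then (d i - d j.-1)%N else 0%N.

Lemma DE (j : nat) (d : nat -> nat) (hd : forall a b : nat, (a <= b)%N -> (b < j)%N -> (d b <= d a)%N)
  (hj1 : (1 <= j)%N) n (i : 'I_n) :
  Dv j d i = ((if (i < j)%N then d j.-1 else 0) + Ev j d i)%N.
Proof.
rewrite /Dv /Ev; case: ltnP => h1; case: ltnP => h2 //; try lia.
  have : (d j.-1 <= d i)%N by apply: hd; lia.
  lia.
have -> : nat_of_ord i = j.-1 by lia.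
lia.
Qed.

Definition cfg (j : nat) (d : nat -> nat) n (S : {set 'I_n}) (t : 'S_n) (k : 'I_n) : nat :=
  ((if k \in S then d j.-1 else 0) + Ev j d (t k))%N.

Definition Asum (X : comPzSemiRingType) n (x : 'I_n -> X) j d :=
  \sum_(s : 'S_n) mon x (fun k => Dv j d ((s^-1)%g k)).

Lemma Ev0 j d n (i : 'I_n) : (j.-1 <= i)%N -> Ev j d i = 0%N.
Proof. by move=> h; rewrite /Ev ltnNge h. Qed.

Lemma config (X : comPzSemiRingType) (hid : idempotent_semiring X)
  (hfr : frobenius_semiring X) n j d
  (hd : forall a b : nat, (a <= b)%N -> (b < j)%N -> (d b <= d a)%N)
  (hj1 : (1 <= j)%N) (hjn : (j <= n)%N) (x : 'I_n -> X) m :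
  forall (t : 'S_n) (S : {set 'I_n}), #|S| = j ->
  #|[set k | (t k < j.-1)%N] :\: S| = m ->
  leS (mon x (cfg j d S t)) (Asum x j d).
Proof.
elim: m => [|m ih] t S hS hm.
  set U := [set k | (t k < j.-1)%N].
  have hUS : U \subset S by rewrite -setD_eq0 -cards_eq0 hm.
  have hcU : #|U| = j.-1 by rewrite card_U //; lia.
  have hSU : #|S :\: U| = 1%N.
    by rewrite cardsD (setIidPr hUS) hS hcU; lia.
  have [k0 hk0] : exists k0, S :\: U = [set k0] by apply/cards1P; rewrite hSU.
  have : k0 \in S :\: U by rewrite hk0 set11.
  rewrite inE => /andP [hk0U hk0S].
  have hSchar : forall k, (k \in S) = (k \in U) || (k == k0).
    move=> k; case hkU: (k \in U) => /=; first by rewrite (subsetP hUS).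
    by rewrite -in_set1 -hk0 inE hkU.
  have hv : (j.-1 <= t k0)%N by move: hk0U; rewrite inE; lia.
  have hjo : (j.-1 < n)%N by lia.
  pose jo := Ordinal hjo.
  pose t' := (t * tperm (t k0) jo)%g.
  have key : forall k, Dv j d (t' k) = cfg j d S t k.
    move=> k; rewrite (DE hd hj1) /cfg.
    have hkS := hSchar k; move: hkS; rewrite /U inE => hkS.
    rewrite /t' permM; case: tpermP => [h|h|h1 h2].
    - have hk : k = k0 by apply: (@perm_inj _ t).
      subst k; rewrite eqxx orbT in hkS; rewrite hkS /= ifT; last by lia.
      by rewrite !Ev0 //=.
    - rewrite h !Ev0 //= ?addn0 //.
      rewrite h /= ltnn /= in hkS.
      rewrite hkS; case: (eqVneq k k0) => [hk|hne].
        by subst k; rewrite h /= ifT //; lia.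
      have hne' : (t k0 : nat) != j.-1.
        apply/negP => /eqP h'; case/negP: hne.
        have : t k0 = t k by rewrite h; apply: val_inj.
        by move/perm_inj => ->.
      by rewrite ifF //; apply/negbTE; rewrite -leqNgt; move: hne'; lia.
    - have hne : k != k0 by apply/eqP => hk; apply: h1; rewrite hk.
      rewrite (negbTE hne) orbF in hkS; rewrite hkS.
      have : (t k : nat) != j.-1.
        by apply/negP => /eqP hh; apply: h2; apply/val_inj.
      move=> hh; rewrite (_ : (t k < j)%N = (t k < j.-1)%N) //; apply/idP/idP; move: hh; lia.
  have -> : mon x (cfg j d S t) = mon x (fun k => Dv j d (((t'^-1)^-1)%g k)).
    by rewrite invgK /mon; apply: eq_bigr => k _; rewrite key.
  exact: (@leS_term _ hid _ predT (fun s : 'S_n => mon x (fun k => Dv j d ((s^-1)%g k))) _ isT).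

set U := [set k | (t k < j.-1)%N].
have hcU : #|U| = j.-1 by rewrite card_U //; lia.
have [u huUS] : exists u, u \in U :\: S by apply/card_gt0P; rewrite hm.
move: (huUS); rewrite inE => /andP [huS huU].
have hSU : (0 < #|S :\: U|)%N.
  rewrite cardsD hS.
  have : (#|S :&: U| <= #|U|)%N by apply: subset_leq_card; apply: subsetIr.
  lia.
have [s hsSU] : exists s, s \in S :\: U by apply/card_gt0P.
move: (hsSU); rewrite inE => /andP [hsU hsS].
have hus : u != s by apply/negP => /eqP e; move: huS; rewrite e hsS.
have hus' : s != u by rewrite eq_sym.
move: (huU) (hsU); rewrite !inE => huU' hsU'.
have hEs : Ev j d (t s) = 0%N by apply: Ev0; lia.
pose S' := u |: (S :\ s).
pose t' := (tperm u s * t)%g.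
have ht'u : t' u = t s by rewrite /t' permM tpermL.
have ht's : t' s = t u by rewrite /t' permM tpermR.
have ht'k : forall k, k != u -> k != s -> t' k = t k.
  by move=> k h1 h2; rewrite /t' permM tpermD // eq_sym.
apply: (@leS_trans _ _ (mon x (cfg j d S' t) + mon x (cfg j d S t'))).
  apply: (@mon_exch _ hid hfr _ x _ _ _ u s (Ev j d (t u)) (d j.-1) hus).
  - by rewrite /cfg (negbTE huS).
  - by rewrite /cfg hsS hEs addn0.
  - by rewrite /cfg /S' !inE eqxx /= addnC.
  - by rewrite /cfg /S' !inE eqxx /= (negbTE hus') hEs.
  - by rewrite /cfg ht'u (negbTE huS) hEs.
  - by rewrite /cfg ht's hsS addnC.
  - move=> k h1 h2; rewrite /cfg /S' !inE (negbTE h1) h2 ht'k //.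
have hD : #|(U :\: S) :\ u| = m.
  by move: hm; rewrite -/U (cardsD1 u) huUS /=; lia.
apply: leS_add.
  apply: ih.
    rewrite /S' cardsU1 !inE (negbTE huS) andbF /=.
    by move: hS; rewrite (cardsD1 s) hsS /=; lia.
  rewrite -hD; apply: eq_card => k; rewrite /U /S' !inE.
  case: (eqVneq k u) => [->|hku] /=; first by [].
  case: (eqVneq k s) => [->|hks] /=; first by rewrite hsS (negbTE hsU').
  by [].
apply: ih => //.
rewrite -hD; apply: eq_card => k; rewrite /U !inE.
case: (eqVneq k u) => [->|hku] /=; first by rewrite ht'u (negbTE hsU') andbF.
case: (eqVneq k s) => [->|hks] /=; first by rewrite hsS.
by rewrite ht'k.
Qed.



Lemma sym_mon (X : comPzSemiRingType) n m (f : nat -> nat) (x : 'I_n -> X) :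
  SymPoly (monom m f) x =
  \sum_(s : 'S_n) mon x (fun k => if (((s^-1)%g k) < m)%N then f ((s^-1)%g k) else 0%N).
Proof.
rewrite /SymPoly; apply: eq_bigr => s _; rewrite /monom /mon big_mkcond /=.
rewrite (reindex_inj (@perm_inj _ (s^-1)%g)) /=.
apply: eq_bigr => k _; rewrite permKV.
by case: ifP => _ //; rewrite expr0.
Qed.

Unset Implicit Arguments.
Theorem lemma4p4 (X : comPzSemiRingType) (hid : idempotent_semiring X)
  (hfr : frobenius_semiring X) (n : nat) (hn : (1 <= n)%N)
  (j : nat) (hj1 : (1 <= j)%N) (hjn : (j <= n)%N) (d : nat -> nat)
  (hd : forall a b : nat, (a <= b)%N -> (b < j)%N -> (d b <= d a)%N) :
  forall x : 'I_n -> X,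
    SymPoly (monom j d) x =
    elem_sym j x ^+ d j.-1 *
      SymPoly (monom j.-1 (fun i => (d i - d j.-1)%N)) x.
Proof.
move=> x.
have hL : SymPoly (monom j d) x = Asum x j d by rewrite sym_mon.
have hQ : SymPoly (monom j.-1 (fun i => (d i - d j.-1)%N)) x =
    \sum_(s : 'S_n) mon x (fun k => Ev j d ((s^-1)%g k)) by rewrite sym_mon.
rewrite hL hQ.
case: (posnP (d j.-1)) => hc.
  rewrite hc expr0 mul1r /Asum; apply: eq_bigr => s _; rewrite /mon.
  by apply: eq_bigr => k _; rewrite (DE hd hj1) hc; case: ifP.
have hE : elem_sym j x ^+ d j.-1 =
    \sum_(S : {set 'I_n} | #|S| == j) mon x (fun k => if k \in S then d j.-1 else 0%N).
  rewrite /elem_sym frob_sum //; apply: eq_bigr => S _.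
  rewrite -prodrXl /mon big_mkcond /=; apply: eq_bigr => k _.
  by case: ifP => _ //; rewrite expr0.
have hR : elem_sym j x ^+ d j.-1 * \sum_(s : 'S_n) mon x (fun k => Ev j d ((s^-1)%g k)) =
    \sum_(S : {set 'I_n} | #|S| == j) \sum_(s : 'S_n) mon x (cfg j d S (s^-1)%g).
  rewrite hE mulr_suml; apply: eq_bigr => S _; rewrite mulr_sumr.
  by apply: eq_bigr => s _; rewrite mon_mul.
rewrite hR; apply: leS_antisym.
  apply: leS_sum => s _.
  pose S0 := [set k | ((s^-1)%g k < j)%N].
  have hS0 : #|S0| == j by rewrite card_U.
  apply: (leS_trans _ (@leS_term _ hid _ (fun S : {set 'I_n} => #|S| == j)
     (fun S => \sum_(s : 'S_n) mon x (cfg j d S (s^-1)%g)) S0 hS0)).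
  apply: (leS_trans _ (@leS_term _ hid _ predT
     (fun s' : 'S_n => mon x (cfg j d S0 (s'^-1)%g)) s isT)).
  have -> : mon x (fun k => Dv j d ((s^-1)%g k)) = mon x (cfg j d S0 (s^-1)%g).
    by rewrite /mon; apply: eq_bigr => k _; rewrite (DE hd hj1) /cfg /S0 inE.
  exact: leS_refl.
apply: leS_sum => S /eqP hS; apply: leS_sum => s _.
exact: (@config _ hid hfr n j d hd hj1 hjn x _ (s^-1)%g S hS erefl).
Qed.
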